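(* For every $\mathtt{PDL}$ sequent $\Gamma\Rightarrow\Delta$: if $\Gamma\Rightarrow\Delta$ is provable in $\mathtt{CGPDL}$, then $\Gamma\Rightarrow\Delta$ is valid.
   Context: $\mathtt{PDL}$ formulas/programs over sets $\mathsf{Prop}$, $\mathsf{AtProg}$: $\varphi ::= \bot \mid p \mid (\varphi\to\varphi) \mid [\pi]\varphi$, $\pi ::= \alpha \mid \pi;\pi \mid \pi\cup\pi \mid \pi^{*} \mid \varphi?$. $[\pi]\Gamma=\{[\pi]\varphi:\varphi\in\Gamma\}$. A model $M=(W,(R_\alpha),V)$: $W\neq\emptyset$, $R_\alpha\subseteq W\times W$, $V:W\to\mathcal P(\mathsf{Prop})$; $R_{\pi_0;\pi_1}$ composition, $R_{\pi_0\cup\pi_1}$ union, $R_{\pi^*}$ reflexive–transitive closure of $R_\pi$, $R_{\psi?}=\{(w,w):M,w\models\psi\}$; $\bot$ false, $p$ true at $w$ iff $p\in V(w)$, $\to$ classical, $[\pi]\varphi$ true at $w$ iff $\varphi$ true at all $v$ with $wR_\pi v$. A sequent $\Gamma\Rightarrow\Delta$ is a pair of finite sets of formulas; valid if in every model at every state where all of $\Gamma$ hold some formula of $\Delta$ holds. $\mathtt{CGPDL}$ rules (premises / conclusion): (Ax) / $\Gamma\Rightarrow\Delta$, $\Gamma\cap\Delta\neq\emptyset$; ($\bot$) / $\Gamma,\bot\Rightarrow\Delta$; ($\to$L) $\Gamma\Rightarrow\varphi,\Delta$ and $\Gamma,\psi\Rightarrow\Delta$ / $\Gamma,\varphi\to\psi\Rightarrow\Delta$;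 ($\to$R) $\Gamma,\varphi\Rightarrow\psi,\Delta$ / $\Gamma\Rightarrow\varphi\to\psi,\Delta$; (Wk) $\Gamma\Rightarrow\Delta$ / $\Gamma'\Rightarrow\Delta'$, $\Gamma\subseteq\Gamma'$, $\Delta\subseteq\Delta'$; (Cut) $\Gamma\Rightarrow\varphi,\Delta$ and $\Gamma,\varphi\Rightarrow\Delta$ / $\Gamma\Rightarrow\Delta$; (K) $\Gamma\Rightarrow\varphi$ / $\Gamma',[\pi]\Gamma\Rightarrow[\pi]\varphi,\Delta$; ($[;]$L) $\Gamma,[\pi_0][\pi_1]\varphi\Rightarrow\Delta$ / $\Gamma,[\pi_0;\pi_1]\varphi\Rightarrow\Delta$; ($[;]$R) $\Gamma\Rightarrow[\pi_0][\pi_1]\varphi,\Delta$ / $\Gamma\Rightarrow[\pi_0;\pi_1]\varphi,\Delta$; ($[\cup]$L) $\Gamma,[\pi_0]\varphi,[\pi_1]\varphi\Rightarrow\Delta$ / $\Gamma,[\pi_0\cup\pi_1]\varphi\Rightarrow\Delta$; ($[\cup]$R) $\Gamma\Rightarrow\Delta,[\pi_0]\varphi$ and $\Gamma\Rightarrow\Delta,[\pi_1]\varphi$ / $\Gamma\Rightarrow[\pi_0\cup\pi_1]\varphi,\Delta$; ($[*]$L) $\Gamma,\varphi,[\pi][\pi^*]\varphi\Rightarrow\Delta$ / $\Gamma,[\pi^*]\varphi\Rightarrow\Delta$; ($[?]$L) $\Gamma\Rightarrow\varphi,\Delta$ and $\Gamma,\psi\Rightarrow\Delta$ / $\Gamma,[\varphi?]\psi\Rightarrow\Delta$;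 ($[?]$R) $\Gamma,\varphi\Rightarrow\psi,\Delta$ / $\Gamma\Rightarrow[\varphi?]\psi,\Delta$; (C-s) $\Gamma\Rightarrow\varphi,\Delta$ and $\Gamma\Rightarrow[\pi][\pi^*]\varphi,\Delta$ / $\Gamma\Rightarrow[\pi^*]\varphi,\Delta$. A pre-proof is a finite tree of sequents built of rule instances whose leaves are Ax/$\bot$ instances or buds, with each bud assigned a companion (an inner node labelled with the same sequent); the derivation graph identifies each bud with its companion; a path is a sequence of nodes each a premise of the previous one's rule instance. A trace along a path $(\Gamma_i\Rightarrow\Delta_i)$ is a sequence $\tau_i\in\Delta_i$ such that: at ($\to$R), ($[;]$R), ($[\cup]$R), ($[?]$R), (C-s), either $\tau_{i+1}=\tau_i$ or $\tau_i$ is the principal formula and $\tau_{i+1}$ is its component in the chosen premise ($\psi$ for $\varphi\to\psi$; $[\pi_0][\pi_1]\varphi$ for $[\pi_0;\pi_1]\varphi$; $[\pi_j]\varphi$ for $[\pi_0\cup\pi_1]\varphi$ in the premise containing $[\pi_j]\varphi$; $\psi$ for $[\varphi?]\psi$; $\varphi$ or $[\pi][\pi^*]\varphi$ for $[\pi^*]\varphi$, the latter being a progress point); at (K), $\tau_i$ is the principal formula $[\pi]\varphi$ and $\tau_{i+1}=\varphi$; at all other rules, $\tau_{i+1}=\tau_i$. A $\mathtt{CGPDL}$ proof is a pre-proof in which every infinite path of the derivation graph has a tail followed by a trace with infinitely many progress points; provable means having such a proof with the sequent at the root. *)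

(* Defs.v *)
From Stdlib Require Import List Relations Arith.
Import ListNotations.
Set Implicit Arguments.

Inductive form (P A : Type) : Type :=
| Bot : form P A
| Var : P -> form P A
| Imp : form P A -> form P A -> form P A
| Box : prog P A -> form P A -> form P A
with prog (P A : Type) : Type :=
| Atom : A -> prog P A
| PSeq : prog P A -> prog P A -> prog P A
| PCup : prog P A -> prog P A -> prog P A
| PStar : prog P A -> prog P A
| PTest : form P A -> prog P A.

Arguments Bot {P A}.
Arguments Var {P A} _.
Arguments Imp {P A} _ _.
Arguments Box {P A} _ _.
Arguments Atom {P A} _.
Arguments PSeq {P A} _ _.
Arguments PCup {P A} _ _.
Arguments PStar {P A} _.
Arguments PTest {P A} _.

Record model (P A : Type) : Type := Model {
  world : Type;
  world_nonempty : inhabited world;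
  acc : A -> world -> world -> Prop;
  val : world -> P -> Prop
}.

Fixpoint sat {P A} (M : model P A) (w : world M) (f : form P A) {struct f} : Prop :=
  match f with
  | Bot => False
  | Var p => val M w p
  | Imp f g => sat M w f -> sat M w g
  | Box a g => forall v, rel M a w v -> sat M v g
  end
with rel {P A} (M : model P A) (a : prog P A) {struct a} : world M -> world M -> Prop :=
  match a with
  | Atom x => acc M x
  | PSeq a b => fun w u => exists v, rel M a w v /\ rel M b v u
  | PCup a b => fun w v => rel M a w v \/ rel M b w v
  | PStar a => clos_refl_trans (world M) (rel M a)
  | PTest f => fun w v => w = v /\ sat M w f
  end.

(* ---------- Sequents (pairs of finite sets, represented by lists) ---------- *)
Record sequent (P A : Type) : Type := Sq { ant : list (form P A); suc : list (form P A) }.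
Arguments Sq {P A} _ _.

Definition eqset {T} (l1 l2 : list T) : Prop := forall x, In x l1 <-> In x l2.
Definition seq_eq {P A} (s t : sequent P A) : Prop :=
  eqset (ant s) (ant t) /\ eqset (suc s) (suc t).

Definition valid {P A} (s : sequent P A) : Prop :=
  forall (M : model P A) (w : world M),
    (forall f, In f (ant s) -> sat M w f) -> exists g, In g (suc s) /\ sat M w g.

Inductive rule (P A : Type) : Type :=
| RAx | RBotL | RImpL (f g : form P A) | RImpR (f g : form P A) | RWk
| RCut (f : form P A) | RK (a : prog P A) (f : form P A)
| RSeqL (a b : prog P A) (f : form P A) | RSeqR (a b : prog P A) (f : form P A)
| RCupL (a b : prog P A) (f : form P A) | RCupR (a b : prog P A) (f : form P A)
| RStarL (a : prog P A) (f : form P A)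
| RTestL (f g : form P A) | RTestR (f g : form P A)
| RCs (a : prog P A) (f : form P A).
Arguments RAx {P A}. Arguments RBotL {P A}. Arguments RWk {P A}.

(* rule instances with literal premises/conclusion; "Gamma, phi" is phi :: Gamma *)
Inductive inst0 {P A} : rule P A -> list (sequent P A) -> sequent P A -> Prop :=
| I_Ax G D f : In f G -> In f D -> inst0 RAx [] (Sq G D)
| I_Bot G D : inst0 RBotL [] (Sq (Bot :: G) D)
| I_ImpL G D f g :
    inst0 (RImpL f g) [Sq G (f :: D); Sq (g :: G) D] (Sq (Imp f g :: G) D)
| I_ImpR G D f g : inst0 (RImpR f g) [Sq (f :: G) (g :: D)] (Sq G (Imp f g :: D))
| I_Wk G D G' D' : incl G G' -> incl D D' -> inst0 RWk [Sq G D] (Sq G' D')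
| I_Cut G D f : inst0 (RCut f) [Sq G (f :: D); Sq (f :: G) D] (Sq G D)
| I_K G G' D a f : inst0 (RK a f) [Sq G [f]] (Sq (G' ++ map (Box a) G) (Box a f :: D))
| I_SeqL G D a b f :
    inst0 (RSeqL a b f) [Sq (Box a (Box b f) :: G) D] (Sq (Box (PSeq a b) f :: G) D)
| I_SeqR G D a b f :
    inst0 (RSeqR a b f) [Sq G (Box a (Box b f) :: D)] (Sq G (Box (PSeq a b) f :: D))
| I_CupL G D a b f :
    inst0 (RCupL a b f) [Sq (Box a f :: Box b f :: G) D] (Sq (Box (PCup a b) f :: G) D)
| I_CupR G D a b f :
    inst0 (RCupR a b f) [Sq G (Box a f :: D); Sq G (Box b f :: D)]
          (Sq G (Box (PCup a b) f :: D))
| I_StarL G D a f :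
    inst0 (RStarL a f) [Sq (f :: Box a (Box (PStar a) f) :: G) D]
          (Sq (Box (PStar a) f :: G) D)
| I_TestL G D f g :
    inst0 (RTestL f g) [Sq G (f :: D); Sq (g :: G) D] (Sq (Box (PTest f) g :: G) D)
| I_TestR G D f g :
    inst0 (RTestR f g) [Sq (f :: G) (g :: D)] (Sq G (Box (PTest f) g :: D))
| I_Cs G D a f :
    inst0 (RCs a f) [Sq G (f :: D); Sq G (Box a (Box (PStar a) f) :: D)]
          (Sq G (Box (PStar a) f :: D)).

(* instances up to equality of sequents as pairs of sets *)
Definition inst {P A} (r : rule P A) (ps : list (sequent P A)) (c : sequent P A) : Prop :=
  exists ps' c', Forall2 seq_eq ps ps' /\ seq_eq c c' /\ inst0 r ps' c'.

(* allowed trace step at rule r, going from the conclusion to premise number j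
   (0-based, in the order the premises are listed above) *)
Definition tstep {P A} (r : rule P A) (j : nat) (t t' : form P A) : Prop :=
  match r with
  | RImpR f g => t' = t \/ (t = Imp f g /\ t' = g)
  | RSeqR a b f => t' = t \/ (t = Box (PSeq a b) f /\ t' = Box a (Box b f))
  | RCupR a b f => t' = t \/
      (t = Box (PCup a b) f /\ ((j = 0 /\ t' = Box a f) \/ (j = 1 /\ t' = Box b f)))
  | RTestR f g => t' = t \/ (t = Box (PTest f) g /\ t' = g)
  | RCs a f => t' = t \/
      (t = Box (PStar a) f /\ ((j = 0 /\ t' = f) \/ (j = 1 /\ t' = Box a (Box (PStar a) f))))
  | RK a f => t = Box a f /\ t' = f
  | _ => t' = t
  end.

Definition progress {P A} (r : rule P A) (j : nat) (t t' : form P A) : Prop :=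
  exists a f, r = RCs a f /\ j = 1 /\ t = Box (PStar a) f /\ t' = Box a (Box (PStar a) f).

(* finite trees: inner/axiom nodes labelled by a sequent and a rule, and buds
   carrying the address of their companion (addresses = lists of child indices) *)
Inductive ptree (P A : Type) : Type :=
| PNode : sequent P A -> rule P A -> list (ptree P A) -> ptree P A
| PBud : sequent P A -> list nat -> ptree P A.
Arguments PNode {P A} _ _ _.
Arguments PBud {P A} _ _.

Definition label {P A} (t : ptree P A) : sequent P A :=
  match t with PNode s _ _ => s | PBud s _ => s end.

Fixpoint subtree {P A} (t : ptree P A) (a : list nat) : option (ptree P A) :=
  match a with
  | [] => Some t
  | j :: a' =>
      match t with
      | PNode _ _ ch => match nth_error ch j with Some t' => subtree t' a' | None => None end
      | PBud _ _ => None
      end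
  end.

Definition preproof {P A} (T : ptree P A) : Prop :=
  (* every non-bud node is an instance of a rule (nodes without children are
     thus exactly Ax / bot instances) *)
  (forall a s r ch, subtree T a = Some (PNode s r ch) -> inst r (map label ch) s) /\
  (forall a s c, subtree T a = Some (PBud s c) ->
     exists s' r' ch', subtree T c = Some (PNode s' r' ch') /\ ch' <> [] /\ seq_eq s s').

(* edges of the derivation graph: from node a to its j-th premise, buds being
   identified with their companions *)
Definition dstep {P A} (T : ptree P A) (a : list nat) (j : nat) (b : list nat) : Prop :=
  exists s r ch child,
    subtree T a = Some (PNode s r ch) /\ nth_error ch j = Some child /\
    match child with
    | PNode _ _ _ => b = a ++ [j]
    | PBud _ c => b = c
    end.

Definition node_rule {P A} (T : ptree P A) (a : list nat) (r : rule P A) : Prop :=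
  exists s ch, subtree T a = Some (PNode s r ch).

Definition in_succ {P A} (T : ptree P A) (a : list nat) (f : form P A) : Prop :=
  exists t, subtree T a = Some t /\ In f (suc (label t)).

(* global soundness condition: every infinite path (given by its nodes p i and
   the chosen premise indices js i) has a tail followed by a trace with
   infinitely many progress points *)
Definition cgpdl_proof {P A} (T : ptree P A) : Prop :=
  preproof T /\
  forall (p : nat -> list nat) (js : nat -> nat),
    (forall i, dstep T (p i) (js i) (p (S i))) ->
    exists (n : nat) (tau : nat -> form P A),
      (forall i, n <= i -> in_succ T (p i) (tau i)) /\
      (forall i, n <= i -> exists r, node_rule T (p i) r /\ tstep r (js i) (tau i) (tau (S i))) /\
      (forall m, exists k, m <= k /\ n <= k /\
         exists r, node_rule T (p k) r /\ progress r (js k) (tau k) (tau (S k))).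

Definition provable {P A} (s : sequent P A) : Prop :=
  exists T : ptree P A, cgpdl_proof T /\ seq_eq (label T) s.

(* Main.v *)
Require Import Defs.
From Stdlib Require Import List Relations Arith Lia Classical ClassicalEpsilon.
Import ListNotations.

Section Sound.
Context {P A : Type} (M : model P A).

Inductive ref : world M -> form P A -> nat -> Prop :=
| ref_bot w : ref w Bot 0
| ref_var w p : ~ val M w p -> ref w (Var p) 0
| ref_imp w f g n : sat M w f -> ref w g n -> ref w (Imp f g) n
| ref_box w v a f m n : pref a w v m -> ref v f n -> ref w (Box a f) (m + n)
with pref : prog P A -> world M -> world M -> nat -> Prop :=
| pref_atom x w v : acc M x w v -> pref (Atom x) w v 0
| pref_seq a b w v u m n : pref a w v m -> pref b v u n -> pref (PSeq a b) w u (m + n)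
| pref_cupl a b w v n : pref a w v n -> pref (PCup a b) w v n
| pref_cupr a b w v n : pref b w v n -> pref (PCup a b) w v n
| pref_test f w : sat M w f -> pref (PTest f) w w 0
| pref_refl a w : pref (PStar a) w w 0
| pref_step a w v u m n : pref a w v m -> pref (PStar a) v u n -> pref (PStar a) w u (S (m + n)).

Scheme ref_ind2 := Induction for ref Sort Prop
with pref_ind2 := Induction for pref Sort Prop.

Lemma pref_sound : forall a w v n, pref a w v n -> rel M a w v.
Proof.
  apply (pref_ind2 (fun w f n _ => ~ sat M w f) (fun a w v n _ => rel M a w v));
    simpl; intros; try tauto.
  - intro H1. apply H0. apply H1. exact H.
  - eauto.
  - apply rt_refl.
  - eapply rt_trans; [apply rt_step; eassumption | eassumption].
Qed.

Lemma ref_sound : forall w f n, ref w f n -> ~ sat M w f.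
Proof.
  apply (ref_ind2 (fun w f n _ => ~ sat M w f) (fun a w v n _ => rel M a w v));
    simpl; intros; try tauto.
  - intro H1. apply H0. apply H1. exact H.
  - eauto.
  - apply rt_refl.
  - eapply rt_trans; [apply rt_step; eassumption | eassumption].
Qed.

Scheme form_ind2 := Induction for form Sort Prop
with prog_ind2 := Induction for prog Sort Prop.

Lemma ref_complete : forall f w, ~ sat M w f -> exists n, ref w f n.
Proof.
  apply (@form_ind2 P A (fun f => forall w, ~ sat M w f -> exists n, ref w f n)
                   (fun a => forall w v, rel M a w v -> exists n, pref a w v n));
    simpl; intros.
  - eexists; constructor.
  - eexists; constructor; auto.
  - destruct (classic (sat M w f)) as [Hf|Hf].
    + destruct (H0 w) as [n Hn]. { intro Hg. apply H1. intros _. exact Hg. }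
      eexists; constructor; eauto.
    + exfalso. apply H1. intro. contradiction.
  - apply not_all_ex_not in H1. destruct H1 as [v Hv].
    apply imply_to_and in Hv. destruct Hv as [Hr Hs].
    destruct (H w v Hr) as [m Hm]. destruct (H0 v Hs) as [n Hn].
    eexists; econstructor; eauto.
  - eexists; constructor; auto.
  - destruct H1 as [u [H1 H2]].
    destruct (H w u H1) as [m Hm]. destruct (H0 u v H2) as [n Hn].
    eexists; econstructor; eauto.
  - destruct H1 as [H1|H1].
    + destruct (H w v H1) as [m Hm]. eexists; apply pref_cupl; eauto.
    + destruct (H0 w v H1) as [m Hm]. eexists; apply pref_cupr; eauto.
  - apply clos_rt_rt1n in H0. induction H0.
    + eexists; apply pref_refl.
    + destruct IHclos_refl_trans_1n as [n Hn]. destruct (H x y H0) as [m Hm].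
      eexists; eapply pref_step; eauto.
  - destruct H0; subst. eexists; constructor; auto.
Qed.

Lemma nat_min (Q : nat -> Prop) : (exists n, Q n) -> exists n, Q n /\ forall m, Q m -> n <= m.
Proof.
  intros [n Hn]. induction n as [n IH] using (well_founded_induction lt_wf).
  destruct (classic (exists m, m < n /\ Q m)) as [[m [Hm1 Hm2]]|Hno].
  - exact (IH m Hm1 Hm2).
  - exists n. split; auto. intros m Hm. destruct (Nat.lt_ge_cases m n); auto.
    exfalso; eauto.
Qed.

Definition minR w f k := ref w f k /\ forall m, ref w f m -> k <= m.

Lemma minR_ex w f : ~ sat M w f -> exists k, minR w f k.
Proof. intro H. apply nat_min. apply ref_complete; auto. Qed.

Lemma minR_unique w f k k' : minR w f k -> minR w f k' -> k = k'.
Proof. intros [H1 H2] [H3 H4]. specialize (H2 _ H3). specialize (H4 _ H1). lia. Qed.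


Definition cnt w (s : sequent P A) :=
  (forall f, In f (ant s) -> sat M w f) /\ (forall f, In f (suc s) -> ~ sat M w f).

Lemma cnt_eq w s t : seq_eq s t -> cnt w s -> cnt w t.
Proof.
  intros [H1 H2] [H3 H4]. split; intros f Hf; [apply H3, H1 | apply H4, H2]; exact Hf.
Qed.

Lemma seq_eq_sym (s t : sequent P A) : seq_eq s t -> seq_eq t s.
Proof. intros [H1 H2]; split; intro x; [specialize (H1 x)|specialize (H2 x)]; tauto. Qed.

Definition TransR (r : rule P A) j w w' := forall t t' k k', tstep r j t t' ->
  minR w t k -> minR w' t' k' -> k' <= k /\ (progress r j t t' -> k' < k).

Lemma trans_same r j w : (forall t t', tstep r j t t' -> t' = t) ->
  (forall a f, r <> RCs a f) -> TransR r j w w.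
Proof.
  intros H1 H2 t t' k k' Hs Hk Hk'. apply H1 in Hs; subst.
  rewrite (minR_unique _ _ _ _ Hk Hk'). split; auto.
  intros [a [f [Hr _]]]. exfalso; eapply H2; eauto.
Qed.

Ltac same := apply trans_same; [simpl; auto | intros ? ? ?; discriminate].

Lemma sat_box_false w a f : ~ sat M w (Box a f) ->
  exists v m n, pref a w v m /\ ref v f n /\ minR w (Box a f) (m + n).
Proof.
  intro H. destruct (minR_ex _ _ H) as [k Hk]. pose proof Hk as [Hr _].
  inversion Hr; subst. exists v, m, n. auto.
Qed.

Lemma local_step r ps c w : inst0 r ps c -> cnt w c ->
  exists j p w', nth_error ps j = Some p /\ cnt w' p /\ TransR r j w w'.
Proof.
  intros Hi [Ha Hs]. destruct Hi; simpl in Ha, Hs.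
  - exfalso. eapply Hs; eauto.
  - exfalso. apply (Ha Bot); simpl; auto.
  - destruct (classic (sat M w f)) as [Hf|Hf].
    + exists 1, (Sq (g :: G) D), w. split; [reflexivity|split; [|same]].
      split; simpl; intros x Hx; [destruct Hx as [<-|Hx]|]; auto.
      apply (Ha (Imp f g)); auto.
    + exists 0, (Sq G (f :: D)), w. split; [reflexivity|split; [|same]].
      split; simpl; intros x Hx; [|destruct Hx as [<-|Hx]]; auto.
  - assert (Hn := Hs (Imp f g) (or_introl eq_refl)). simpl in Hn.
    exists 0, (Sq (f :: G) (g :: D)), w. split; [reflexivity|split].
    + split; simpl; intros x Hx; destruct Hx as [<-|Hx]; auto.
      all: try (apply NNPP; intro; apply Hn; intro; contradiction).
      all: try (intro; apply Hn; auto).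
    + intros t t' k k' Hst Hk Hk'. simpl in Hst.
      split; [|intros [? [? [? _]]]; discriminate].
      destruct Hst as [<-|[-> ->]].
      * rewrite (minR_unique _ _ _ _ Hk Hk'); auto.
      * destruct Hk as [Hr _]. inversion Hr; subst. apply Hk'; auto.
  - exists 0, (Sq G D), w. split; [reflexivity|split; [|same]].
    split; simpl; intros x Hx; auto.
  - destruct (classic (sat M w f)) as [Hf|Hf].
    + exists 1, (Sq (f :: G) D), w. split; [reflexivity|split; [|same]].
      split; simpl; intros x Hx; [destruct Hx as [<-|Hx]|]; auto.
    + exists 0, (Sq G (f :: D)), w. split; [reflexivity|split; [|same]].
      split; simpl; intros x Hx; [|destruct Hx as [<-|Hx]]; auto.
  - destruct (sat_box_false w a f (Hs _ (or_introl eq_refl))) as [v [m [n [Hp [Hr Hm]]]]].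
    exists 0, (Sq G [f]), v. split; [reflexivity|split].
    + split; simpl; intros x Hx.
      * assert (Hb : sat M w (Box a x)).
        { apply Ha. apply in_or_app. right. apply in_map. auto. }
        apply Hb. eapply pref_sound; eauto.
      * destruct Hx as [<-|[]]. eapply ref_sound; eauto.
    + intros t t' k k' Hst Hk Hk'. simpl in Hst. destruct Hst as [-> ->].
      rewrite <- (minR_unique _ _ _ _ Hm Hk).
      split; [|intros [? [? [? _]]]; discriminate].
      apply Hk' in Hr. lia.
  - exists 0, (Sq (Box a (Box b f) :: G) D), w. split; [reflexivity|split; [|same]].
    split; simpl; intros x Hx; auto. destruct Hx as [<-|Hx]; auto.
    intros v Hv u Hu. apply (Ha (Box (PSeq a b) f)); simpl; eauto.
  - destruct (sat_box_false w _ f (Hs _ (or_introl eq_refl))) as [v [m [n [Hp [Hr Hm]]]]].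
    inversion Hp; subst.
    assert (Hr2 : ref w (Box a (Box b f)) (m0 + (n0 + n))) by (econstructor; eauto; econstructor; eauto).
    exists 0, (Sq G (Box a (Box b f) :: D)), w. split; [reflexivity|split].
    + split; simpl; intros x Hx; auto. destruct Hx as [<-|Hx]; auto.
      eapply ref_sound; eauto.
    + intros t t' k k' Hst Hk Hk'. simpl in Hst.
      split; [|intros [? [? [? _]]]; discriminate].
      destruct Hst as [<-|[-> ->]].
      * rewrite (minR_unique _ _ _ _ Hk Hk'); auto.
      * rewrite <- (minR_unique _ _ _ _ Hm Hk). apply Hk' in Hr2. lia.
  - exists 0, (Sq (Box a f :: Box b f :: G) D), w. split; [reflexivity|split; [|same]].
    split; simpl; intros x Hx; auto. destruct Hx as [<-|[<-|Hx]]; auto.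
    + intros v Hv. apply (Ha (Box (PCup a b) f)); simpl; auto.
    + intros v Hv. apply (Ha (Box (PCup a b) f)); simpl; auto.
  - destruct (sat_box_false w _ f (Hs _ (or_introl eq_refl))) as [v [m [n [Hp [Hr Hm]]]]].
    inversion Hp; subst.
    + assert (Hr2 : ref w (Box a f) (m + n)) by (econstructor; eauto).
      exists 0, (Sq G (Box a f :: D)), w. split; [reflexivity|split].
      * split; simpl; intros x Hx; auto. destruct Hx as [<-|Hx]; auto.
        eapply ref_sound; eauto.
      * intros t t' k k' Hst Hk Hk'. simpl in Hst.
        split; [|intros [? [? [? _]]]; discriminate].
        destruct Hst as [<-|[-> [[_ ->]|[? _]]]]; try discriminate.
        -- rewrite (minR_unique _ _ _ _ Hk Hk'); auto.
        -- rewrite <- (minR_unique _ _ _ _ Hm Hk). apply Hk' in Hr2. lia.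
    + assert (Hr2 : ref w (Box b f) (m + n)) by (econstructor; eauto).
      exists 1, (Sq G (Box b f :: D)), w. split; [reflexivity|split].
      * split; simpl; intros x Hx; auto. destruct Hx as [<-|Hx]; auto.
        eapply ref_sound; eauto.
      * intros t t' k k' Hst Hk Hk'. simpl in Hst.
        split; [|intros [? [? [? _]]]; discriminate].
        destruct Hst as [<-|[-> [[? _]|[_ ->]]]]; try discriminate.
        -- rewrite (minR_unique _ _ _ _ Hk Hk'); auto.
        -- rewrite <- (minR_unique _ _ _ _ Hm Hk). apply Hk' in Hr2. lia.
  - assert (Hb := Ha _ (or_introl eq_refl)). simpl in Hb.
    exists 0, (Sq (f :: Box a (Box (PStar a) f) :: G) D), w. split; [reflexivity|split; [|same]].
    split; simpl; intros x Hx; auto. destruct Hx as [<-|[<-|Hx]]; auto.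
    + apply Hb. apply rt_refl.
    + intros v Hv u Hu. apply Hb. eapply rt_trans; [apply rt_step|]; eauto.
  - assert (Hb := Ha _ (or_introl eq_refl)). simpl in Hb.
    destruct (classic (sat M w f)) as [Hf|Hf].
    + exists 1, (Sq (g :: G) D), w. split; [reflexivity|split; [|same]].
      split; simpl; intros x Hx; [destruct Hx as [<-|Hx]|]; auto.
    + exists 0, (Sq G (f :: D)), w. split; [reflexivity|split; [|same]].
      split; simpl; intros x Hx; [|destruct Hx as [<-|Hx]]; auto.
  - assert (Hn := Hs _ (or_introl eq_refl)). simpl in Hn.
    destruct (classic (sat M w f)) as [Hf|Hf].
    + exists 0, (Sq (f :: G) (g :: D)), w. split; [reflexivity|split].
      * split; simpl; intros x Hx; destruct Hx as [<-|Hx]; auto.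
        intro Hg. apply Hn. intros v [<- _]. auto.
      * intros t t' k k' Hst Hk Hk'. simpl in Hst.
        split; [|intros [? [? [? _]]]; discriminate].
        destruct Hst as [<-|[-> ->]].
        -- rewrite (minR_unique _ _ _ _ Hk Hk'); auto.
        -- destruct Hk as [Hr _]. inversion Hr; subst.
           match goal with H : pref _ _ _ _ |- _ => inversion H; subst end.
           apply Hk'; auto.
    + exfalso. apply Hn. intros v [_ Hv]. contradiction.
  - destruct (sat_box_false w _ f (Hs _ (or_introl eq_refl))) as [v [m [n [Hp [Hr Hm]]]]].
    inversion Hp; subst.
    + exists 0, (Sq G (f :: D)), v. split; [reflexivity|split].
      * split; simpl; intros x Hx; auto. destruct Hx as [<-|Hx]; auto.
        eapply ref_sound; eauto.
      * intros t t' k k' Hst Hk Hk'. simpl in Hst.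
        split; [|intros [? [? [? [? _]]]]; discriminate].
        destruct Hst as [<-|[-> [[_ ->]|[? _]]]]; try discriminate.
        -- rewrite (minR_unique _ _ _ _ Hk Hk'); auto.
        -- rewrite <- (minR_unique _ _ _ _ Hm Hk). apply Hk' in Hr. lia.
    + assert (Hr2 : ref w (Box a (Box (PStar a) f)) (m0 + (n0 + n)))
        by (econstructor; eauto; econstructor; eauto).
      exists 1, (Sq G (Box a (Box (PStar a) f) :: D)), w. split; [reflexivity|split].
      * split; simpl; intros x Hx; auto. destruct Hx as [<-|Hx]; auto.
        eapply ref_sound; eauto.
      * intros t t' k k' Hst Hk Hk'.
        split.
        -- simpl in Hst. destruct Hst as [<-|[-> [[? _]|[_ ->]]]]; try discriminate.
           ++ rewrite (minR_unique _ _ _ _ Hk Hk'); auto.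
           ++ rewrite <- (minR_unique _ _ _ _ Hm Hk). apply Hk' in Hr2. lia.
        -- intros [a' [f' [He [_ [-> ->]]]]]. injection He; intros; subst.
           rewrite <- (minR_unique _ _ _ _ Hm Hk). apply Hk' in Hr2. lia.
Qed.


Lemma forall2_nth {X Y} (R : X -> Y -> Prop) l1 l2 j y :
  Forall2 R l1 l2 -> nth_error l2 j = Some y -> exists x, nth_error l1 j = Some x /\ R x y.
Proof.
  intros H. revert j. induction H; intros j Hj; destruct j; simpl in *; try discriminate.
  - injection Hj as <-. eauto.
  - eauto.
Qed.

Lemma subtree_app (T t : ptree P A) a b :
  subtree T a = Some t -> subtree T (a ++ b) = subtree t b.
Proof.
  revert T. induction a as [|j a IH]; intros T H; simpl in *.
  - injection H as ->. reflexivity.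
  - destruct T; try discriminate. destruct (nth_error l j); try discriminate. auto.
Qed.

Definition Inv (T : ptree P A) (x : list nat * world M) :=
  exists s r ch, subtree T (fst x) = Some (PNode s r ch) /\ cnt (snd x) s.

Definition Good (T : ptree P A) (x : list nat * world M) (jy : nat * (list nat * world M)) :=
  dstep T (fst x) (fst jy) (fst (snd jy)) /\ Inv T (snd jy) /\
  (forall s r ch, subtree T (fst x) = Some (PNode s r ch) ->
     TransR r (fst jy) (snd x) (snd (snd jy))).

Lemma global_step T : preproof T -> forall x, Inv T x -> exists jy, Good T x jy.
Proof.
  intros [Hpp Hbud] [a w] [s [r [ch [Hsub Hc]]]]. simpl in *.
  destruct (Hpp _ _ _ _ Hsub) as [ps' [c' [HF [Hce Hi]]]].
  destruct (local_step _ _ _ _ Hi (cnt_eq _ _ _ Hce Hc)) as [j [p [w' [Hn [Hcp Htr]]]]].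
  destruct (forall2_nth _ _ _ _ _ HF Hn) as [q [Hq Hqe]].
  rewrite nth_error_map in Hq.
  destruct (nth_error ch j) as [child|] eqn:Hch; try discriminate.
  injection Hq as Hq.
  assert (Hcq : cnt w' q) by (apply (cnt_eq _ p); [apply seq_eq_sym|]; auto).
  assert (Hsub2 : subtree T (a ++ [j]) = Some child).
  { rewrite (subtree_app _ _ _ _ Hsub). simpl. rewrite Hch. reflexivity. }
  assert (HTr : forall s0 r0 ch0, subtree T a = Some (PNode s0 r0 ch0) -> TransR r0 j w w').
  { intros s0 r0 ch0 H. rewrite Hsub in H. injection H; intros; subst; auto. }
  destruct child as [s1 r1 ch1|s1 c].
  - exists (j, (a ++ [j], w')). split; [|split].
    + exists s, r, ch, (PNode s1 r1 ch1). simpl. auto.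
    + exists s1, r1, ch1. simpl in *. subst. auto.
    + simpl. exact HTr.
  - destruct (Hbud _ _ _ Hsub2) as [s' [r' [ch' [Hc1 [_ Heq]]]]].
    exists (j, (c, w')). split; [|split].
    + exists s, r, ch, (PBud s1 c). simpl. auto.
    + exists s', r', ch'. simpl in *. subst. split; auto. eapply cnt_eq; eauto.
    + simpl. exact HTr.
Qed.

End Sound.

Theorem mainTheorem10 (P A : Type) (s : sequent P A) :
  provable s -> valid s.
Proof.
  intros [T [[Hpp Hinf] Hroot]] M w0 Hant.
  apply NNPP. intro Hno.
  assert (Hc0 : cnt M w0 s).
  { split; auto. intros f Hf Hs. apply Hno. eauto. }
  assert (Hinv0 : Inv M T ([], w0)).
  { destruct T as [s0 r0 ch0|s0 c0].
    - exists s0, r0, ch0. split; [reflexivity|]. simpl.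
      apply (cnt_eq M _ s); [apply seq_eq_sym; exact Hroot|exact Hc0].
    - exfalso. destruct (proj2 Hpp [] s0 c0 eq_refl) as [s' [r' [ch' [Hc _]]]].
      destruct c0; simpl in Hc; discriminate. }
  assert (Hex : forall x, exists jy, Inv M T x -> Good M T x jy).
  { intro x. destruct (classic (Inv M T x)) as [H|H].
    - destruct (global_step M T Hpp x H) as [jy Hjy]. eauto.
    - exists (0, x). intro; contradiction. }
  pose (g := fun x => proj1_sig (constructive_indefinite_description _ (Hex x))).
  assert (Hg : forall x, Inv M T x -> Good M T x (g x)).
  { intro x. exact (proj2_sig (constructive_indefinite_description _ (Hex x))). }
  pose (st := fix st (i : nat) := match i with 0 => ([], w0) | S i => snd (g (st i)) end).
  assert (Hst : forall i, Inv M T (st i)).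
  { induction i; simpl; auto. apply (Hg _ IHi). }
  destruct (Hinf (fun i => fst (st i)) (fun i => fst (g (st i)))) as [n [tau [Hin [Htr Hpr]]]].
  { intro i. apply (Hg _ (Hst i)). }
  set (vk := fun i k => minR M (snd (st i)) (tau i) k).
  assert (Hex2 : forall i, n <= i -> exists k, vk i k).
  { intros i Hi. apply minR_ex. destruct (Hin i Hi) as [t [Ht Hint]].
    destruct (Hst i) as [s1 [r1 [ch1 [Hs1 [_ Hc1]]]]].
    rewrite Hs1 in Ht. injection Ht as <-. apply Hc1. exact Hint. }
  assert (Hmono : forall i k k', n <= i -> vk i k -> vk (S i) k' -> k' <= k).
  { intros i k k' Hi H1 H2. destruct (Htr i Hi) as [r [[s1 [ch1 Hs1]] Hts]].
    destruct (Hg _ (Hst i)) as [_ [_ HT]].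
    exact (proj1 (HT _ _ _ Hs1 _ _ _ _ Hts H1 H2)). }
  assert (Hstrict : forall i k k' r, n <= i -> node_rule T (fst (st i)) r ->
      progress r (fst (g (st i))) (tau i) (tau (S i)) ->
      vk i k -> vk (S i) k' -> k' < k).
  { intros i k k' r Hi [s1 [ch1 Hs1]] Hp H1 H2.
    destruct (Htr i Hi) as [r' [[s2 [ch2 Hs2]] Hts]].
    rewrite Hs1 in Hs2. injection Hs2; intros; subst.
    destruct (Hg _ (Hst i)) as [_ [_ HT]].
    exact (proj2 (HT _ _ _ Hs1 _ _ _ _ Hts H1 H2) Hp). }
  assert (Hdesc : forall d i k, n <= i -> vk i k -> exists k', vk (d + i) k' /\ k' <= k).
  { induction d; intros i k Hi H.
    - exists k. simpl. auto.
    - destruct (IHd i k Hi H) as [k1 [Hk1 Hle]].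
      destruct (Hex2 (S (d + i))) as [k2 Hk2]; [lia|].
      exists k2. split; [exact Hk2|]. specialize (Hmono (d + i) k1 k2 ltac:(lia) Hk1 Hk2). lia. }
  assert (Hfin : forall K i k, n <= i -> vk i k -> k <= K -> False).
  { induction K; intros i k Hi H HK;
      destruct (Hpr i) as [m [Hm1 [Hm2 [r [Hr Hp]]]]];
      destruct (Hdesc (m - i) i k Hi H) as [km [Hkm Hle]];
      replace (m - i + i) with m in Hkm by lia;
      destruct (Hex2 (S m)) as [k2 Hk2]; try lia;
      pose proof (Hstrict _ _ _ _ Hm2 Hr Hp Hkm Hk2).
    - lia.
    - apply (IHK (S m) k2); auto; lia. }
  destruct (Hex2 n (le_n n)) as [k Hk].
  exact (Hfin k n k (le_n n) Hk (le_n k)).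
Qed.
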